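(* Let $\lambda>0$, $\lambda_{max}>0$, $p\in(0,1]$, $r(q)=\min\{p/q,1\}$ for $q\in(0,1]$, and $\mathrm{TH}(q,\tilde q)=r(q)q\exp\!\big(-\frac{\lambda r(\tilde q)\tilde q}{\lambda_{max}}\big)$ for $q,\tilde q\in[0,1]$ (with $r(0)\cdot0=0$). Define the price of anarchy $$\mathrm{PoA}=\frac{\sup_{q\in(0,1]}\lambda\, r(q)q\exp\!\big(-\frac{\lambda r(q)q}{\lambda_{max}}\big)}{\inf_{q^*\ \mathrm{SNE}}\lambda\,\mathrm{TH}(q^*,q^* )},$$ where $q^*\in[0,1]$ is a symmetric Nash equilibrium (SNE) if $\mathrm{TH}(q^*,q^* )=\max_{q\in[0,1]}\mathrm{TH}(q,q^* )$. Then $\mathrm{PoA}=1$ if $p<\frac{\lambda_{max}}{\lambda}$, and $\mathrm{PoA}=\frac{\lambda_{max}}{e\,p\,\lambda\exp(-p\lambda/\lambda_{max})}$ otherwise.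
   Context: ALOHA model with energy-harvesting transmitters (energy arrivals i.i.d. Bernoulli($p$) per slot, infinite battery) located as a homogeneous Poisson point process of density $\lambda$ in $\mathbb{R}^2$; $r(q)$ is the stationary probability of a nonempty battery, $\mathrm{TH}(q,\tilde q)$ the throughput of a transmitter using probability $q$ while all others use $\tilde q$, the numerator of PoA is the globally optimal transmission capacity and the denominator is the transmission capacity at the worst SNE; $\lambda_{max}=\frac{1}{d^2\theta^{2/\alpha}\kappa(\alpha)}$, $\kappa(\alpha)=\frac{2\pi^2}{\alpha\sin(2\pi/\alpha)}$. *)

(* Defs.v *)
From mathcomp Require Import all_boot all_order all_algebra.
From mathcomp Require Import all_classical all_reals all_analysis.
Set Implicit Arguments. Unset Strict Implicit. Unset Printing Implicit Defensive.
Import Order.TTheory GRing.Theory Num.Theory.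
Local Open Scope classical_set_scope.
Local Open Scope ring_scope.

(* r(q) = min{p/q, 1}; note that r 0 * 0 = 0 since the product is taken explicitly. *)
Definition rbat {R : realType} (p q : R) : R := Num.min (p / q) 1.

Definition TH {R : realType} (lambda lmax p q qt : R) : R :=
  rbat p q * q * expR (- (lambda * (rbat p qt * qt)) / lmax).

(* qs is a symmetric Nash equilibrium: qs in [0,1] and TH(qs,qs) is the max over q in [0,1]
   of TH(q, qs) (i.e. it is an upper bound, being itself attained at q = qs). *)
Definition SNE {R : realType} (lambda lmax p qs : R) : Prop :=
  0 <= qs <= 1 /\ (forall q : R, 0 <= q <= 1 -> TH lambda lmax p q qs <= TH lambda lmax p qs qs).

Definition PoA {R : realType} (lambda lmax p : R) : R :=
  sup [set lambda * (rbat p q * q) * expR (- (lambda * (rbat p q * q)) / lmax)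
        | q in [set q : R | 0 < q <= 1]]
  / inf [set lambda * TH lambda lmax p qs qs | qs in [set qs : R | SNE lambda lmax p qs]].

(* Main.v *)
Require Import Defs.
From mathcomp Require Import all_boot all_order all_algebra.
From mathcomp Require Import all_classical all_reals all_analysis.
From mathcomp Require Import ring lra.
Import Order.TTheory GRing.Theory Num.Theory.
Local Open Scope classical_set_scope.
Local Open Scope ring_scope.

Section H.
Variable R : realType.

Lemma rq (p q : R) : 0 < p -> 0 < q -> rbat p q * q = Num.min p q.
Proof.
move=> p0 q0; rewrite /rbat.
have [h|h] := leP p q.
  have h1 : p / q <= 1 by rewrite ler_pdivrMr // mul1r.
  by rewrite minEle h1 divfK // gt_eqF.
have h1 : 1 <= p / q by rewrite ler_pdivlMr // mul1r ltW.
rewrite minEle; case: ifP => h2; last by rewrite mul1r.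
have : p / q = 1 by apply/le_anti; rewrite h1 h2.
by move=> ->; rewrite mul1r.
Qed.

Lemma rq_le (p q : R) : 0 < p -> 0 <= q -> rbat p q * q <= p /\ rbat p q * q <= q.
Proof.
move=> p0; rewrite le_eqVlt => /orP [/eqP <-|q0]; first by rewrite mulr0; split; lra.
by rewrite rq //; split; [by rewrite ge_min lexx | by rewrite ge_min lexx orbT].
Qed.

Lemma bound1 (lambda lmax x : R) : 0 < lambda -> 0 < lmax -> 0 <= x ->
  lambda * x * expR (- (lambda * x) / lmax) <= lmax / expR 1.
Proof.
move=> l0 m0 x0.
set t := lambda * x / lmax.
have e1 : -(lambda * x) / lmax = - t by rewrite /t mulNr.
rewrite e1.
have h : t <= expR (t - 1).
  by have := expR_ge1Dx (t - 1); rewrite addrCA subrr addr0.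
move: h; rewrite expRD expRN => h.
have E1 := expR_gt0 (1 : R).
have Et := expR_gt0 t.
have h2 : t * expR 1 <= expR t.
  have e : expR (-1) = (expR 1)^-1 :> R by rewrite -expRN.
  by rewrite -ler_pdivlMr // -e.
have -> : lambda * x = t * lmax by rewrite /t divfK ?gt_eqF.
clearbody t; rewrite ler_pdivrMr // [X in _ <= X]mulrAC ler_pdivlMr //; nra.
Qed.

Lemma bound2 (lambda lmax p x : R) : 0 < lambda -> 0 < lmax -> 0 < x -> x <= p ->
  lambda * p <= lmax ->
  lambda * x * expR (- (lambda * x) / lmax) <= lambda * p * expR (- (lambda * p) / lmax).
Proof.
move=> l0 m0 x0 xp hp.
have p0 : 0 < p by lra.
set y := lambda * (p - x) / lmax.
have hy := expR_ge1Dx (- y).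
have h1 : p * y <= p - x.
  have b : (p * lambda) / lmax <= 1 by rewrite ler_pdivrMr // mul1r mulrC.
  have a : 0 <= p - x by lra.
  have -> : p * y = (p * lambda / lmax) * (p - x) by rewrite /y; field; lra.
  by rewrite -[leRHS]mul1r ler_wpM2r.
have h2 : x <= p * expR (- y).
  have : p * (1 - y) <= p * expR (- y) by rewrite ler_pM2l //; lra.
  lra.
have -> : - (lambda * p) / lmax = - y + - (lambda * x) / lmax.
  rewrite /y; field; lra.
rewrite expRD.
have Ex := expR_gt0 (- (lambda * x) / lmax).
rewrite -!mulrA ler_pM2l // mulrA ler_pM2r //.
Qed.

End H.

Lemma sup_att (R : realType) (E : set R) (M : R) : E M -> ubound E M -> sup E = M.
Proof.
move=> EM ub; apply/le_anti; rewrite ge_sup //; last by exists M.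
by apply: sup_upper_bound => //; split; [exists M | exists M].
Qed.

Theorem lemma2 (R : realType) (lambda lmax p : R) :
  0 < lambda -> 0 < lmax -> 0 < p <= 1 ->
  PoA lambda lmax p =
    (if p < lmax / lambda then 1
     else lmax / (expR 1 * p * lambda * expR (- (p * lambda) / lmax))).
Proof.
move=> l0 m0 /andP [p0 p1].
set a := lambda * (p * expR (- (lambda * p) / lmax)).
have Ea := expR_gt0 (- (lambda * p) / lmax).
have SNEc : forall qs, SNE lambda lmax p qs <-> p <= qs <= 1.
  move=> qs; split.
    move=> [/andP [qs0 qs1] H].
    have := H 1; rewrite ler01 lexx => /(_ isT); rewrite /TH.
    have Eq := expR_gt0 (- (lambda * (rbat p qs * qs)) / lmax).
    rewrite ler_pM2r // rq // ?ltr01 // (min_l p1) => hp.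
    have [h1 h2] := (@rq_le _ p _ p0) qs0.
    by rewrite qs1 andbT (le_trans hp h2).
  move=> /andP [pq q1]; split; first by rewrite q1 andbT; lra.
  move=> q /andP [q0 _]; rewrite /TH.
  have Eq := expR_gt0 (- (lambda * (rbat p qs * qs)) / lmax).
  rewrite ler_pM2r // [rbat p qs * qs]rq ?(lt_le_trans p0 pq) // (min_l pq).
  by case: ((@rq_le _ p _ p0) q0).
have Hinf : [set lambda * TH lambda lmax p qs qs | qs in [set qs : R | SNE lambda lmax p qs]]
   = [set a].
  apply/seteqP; split => x /=.
    move=> [qs /SNEc /andP [pq _] <-].
    by rewrite /TH /a rq ?(lt_le_trans p0 pq) // (min_l pq) mulrA.
  move=> ->; exists p; first by apply/SNEc; rewrite lexx p1.
  by rewrite /TH /a rq // minxx mulrA.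
rewrite /PoA Hinf inf1.
case: ifP => hp.
  rewrite (@sup_att _ _ (lambda * p * expR (- (lambda * p) / lmax))).
  - by rewrite /a mulrA divff // mulf_neq0 ?gt_eqF // mulr_gt0.
  - exists p; first by rewrite /= p0 p1.
    by rewrite rq // minxx.
  - move=> x [q /andP [q0 q1] <-]; rewrite rq //.
    apply: bound2 => //.
    + by rewrite lt_min p0 q0.
    + by rewrite ge_min lexx.
    + by move: hp; rewrite ltr_pdivlMr // mulrC => /ltW.
rewrite (@sup_att _ _ (lmax / expR 1)).
- rewrite /a mulrC -mulrA [p * lambda]mulrC; field.
  by rewrite !gt_eqF ?expR_gt0.
- have hp' : lmax / lambda <= p by rewrite leNgt hp.
  have q0 : 0 < lmax / lambda by rewrite divr_gt0.
  exists (lmax / lambda); first by rewrite /= q0 (le_trans hp' p1).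
  have e : lambda * (lmax / lambda) = lmax by rewrite mulrC divfK ?gt_eqF.
  rewrite rq // (min_r hp') e mulNr mulfV ?gt_eqF // expRN //.
- move=> x [q /andP [q0 q1] <-]; rewrite rq //.
  apply: bound1 => //.
  by rewrite le_min (ltW p0) ltW.
Qed.
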